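(* Let $b\ge 2$ and $m\ge 0$ be integers. Consider the following nondeterministic procedure. Set $\mathcal U_1=[0,1)^2$. For $n=1,2,\ldots$: if $\mathcal U_n=\emptyset$, stop; otherwise choose an arbitrary box $X_n=\prod_{j=1}^2\left[\frac{u_j(n)}{b^m},\frac{u_j(n)+1}{b^m}\right)\subseteq \mathcal U_n$ with $u_j(n)\in\{0,1,\ldots,b^m-1\}$, and set $\mathcal U_{n+1}=\mathcal U_n\setminus\bigcup_{E\in\mathcal E_m(X_n)}E$. If a run of this procedure stops after exactly $b^m$ boxes $X_1,\ldots,X_{b^m}$ have been chosen, then these boxes constitute a $(0,m,2)$-net in base $b$, i.e., every elementary $b$-adic interval of volume $b^{-m}$ in $[0,1)^2$ contains exactly one of $X_1,\ldots,X_{b^m}$ (equivalently, for any choice of points $\boldsymbol x_n\in X_n$, the set $\{\boldsymbol x_1,\ldots,\boldsymbol x_{b^m}\}$ is a $(0,m,2)$-net in base $b$).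
   Context: An elementary $b$-adic interval in $[0,1)^s$ is a set $\prod_{j=1}^s\left[\frac{a_j}{b^{d_j}},\frac{a_j+1}{b^{d_j}}\right)$ with $d_j\in\mathbb N_0$ and $a_j\in\{0,1,\ldots,b^{d_j}-1\}$; its volume is $b^{-(d_1+\cdots+d_s)}$. For a box $X=\prod_{j=1}^s\left[\frac{u_j}{b^m},\frac{u_j+1}{b^m}\right)$, $\mathcal E_m(X)$ denotes the set of all elementary $b$-adic intervals of volume $b^{-m}$ that contain $X$ as a subset. For integers $0\le t\le m$, a $b^m$-element point set $\mathcal P$ in $[0,1)^s$ is a $(t,m,s)$-net in base $b$ if every elementary $b$-adic interval of volume $b^{t-m}$ contains exactly $b^t$ points of $\mathcal P$. *)

(* Defs.v *)
From mathcomp Require Import all_boot all_order all_algebra.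
From mathcomp Require Import boolp classical_sets reals.
Unset Printing Implicit Defensive.
Import Order.TTheory GRing.Theory Num.Theory.
Local Open Scope classical_set_scope.
Local Open Scope ring_scope.

Definition badic (R : realType) (b d a : nat) : set R :=
  [set x | a%:R / (b ^ d)%:R <= x /\ x < a.+1%:R / (b ^ d)%:R].

Definition bbox (R : realType) (b d1 d2 a1 a2 : nat) : set (R * R) :=
  [set p | badic R b d1 a1 p.1 /\ badic R b d2 a2 p.2].

Definition is_elem (R : realType) (b k : nat) (E : set (R * R)) : Prop :=
  exists d1 d2 a1 a2 : nat,
    [/\ (d1 + d2 = k)%N, (a1 < b ^ d1)%N, (a2 < b ^ d2)%N & E = bbox R b d1 d2 a1 a2].

Definition cell (R : realType) (b m : nat) (u : nat * nat) : set (R * R) :=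
  bbox R b m m u.1 u.2.

Definition union_Em (R : realType) (b m : nat) (X : set (R * R)) : set (R * R) :=
  [set p | exists E, [/\ is_elem R b m E, X `<=` E & E p]].

Definition unit_square (R : realType) : set (R * R) :=
  [set p | (0 <= p.1 /\ p.1 < 1) /\ (0 <= p.2 /\ p.2 < 1)].

(* U R b m u n = U_{n+1} of the procedure, where box X_{k+1} = cell (u k) (0-based) *)
Fixpoint Useq (R : realType) (b m : nat) (u : nat -> nat * nat) (n : nat)
  : set (R * R) :=
  match n with
  | 0%N => unit_square R
  | n'.+1 => Useq R b m u n' `\` union_Em R b m (cell R b m (u n'))
  end.

Definition is_net (R : realType) (b t m N : nat) (x : 'I_N -> R * R) : Prop :=
  [/\ (t <= m)%N, N = (b ^ m)%N, (forall i, unit_square R (x i)) &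
     forall E, is_elem R b (m - t) E ->
       #|[set i : 'I_N | `[< E (x i) >]]| = (b ^ t)%N].

(* Main.v *)
Require Import Defs.
From mathcomp Require Import all_boot all_order all_algebra.
From mathcomp Require Import boolp classical_sets reals.
From mathcomp Require Import zify ring.
Import Order.TTheory GRing.Theory Num.Theory.
Local Open Scope classical_set_scope.
Local Open Scope ring_scope.

Lemma scale_frac (R : realType) (a D B : nat) : (0 < D)%N -> (0 < B)%N ->
  a%:R / D%:R = (a * B)%:R / (D * B)%:R :> R.
Proof.
move=> hD hB; rewrite !natrM.
have hD' : D%:R != 0 :> R by rewrite pnatr_eq0 -lt0n.
have hB' : B%:R != 0 :> R by rewrite pnatr_eq0 -lt0n.
by rewrite -mulf_div divff // mulr1.
Qed.

Lemma ltr_frac (R : realType) (p q M : nat) : (0 < M)%N ->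
  ((p%:R / M%:R : R) < q%:R / M%:R) = (p < q)%N.
Proof.
move=> h; rewrite ltr_pM2r ?invr_gt0 ?ltr0n // ltr_nat //.
Qed.

Lemma ler_frac (R : realType) (p q M : nat) : (0 < M)%N ->
  ((p%:R / M%:R : R) <= q%:R / M%:R) = (p <= q)%N.
Proof.
move=> h; rewrite ler_pM2r ?invr_gt0 ?ltr0n // ler_nat //.
Qed.

Lemma badic_cell (R : realType) (b m d u a : nat) (x : R) : (2 <= b)%N ->
  (d <= m)%N -> badic R b m u x ->
  (badic R b d a x <-> a = (u %/ b ^ (m - d))%N).
Proof.
move=> hb hdm [h1 h2].
have hB : (0 < b ^ (m - d))%N by rewrite expn_gt0; lia.
have hD : (0 < b ^ d)%N by rewrite expn_gt0; lia.
have hM : (b ^ m = b ^ d * b ^ (m - d))%N by rewrite -expnD subnKC.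
have hM0 : (0 < b ^ m)%N by rewrite hM muln_gt0 hD.
rewrite /badic /= (scale_frac R a _ _ hD hB) (scale_frac R a.+1 _ _ hD hB) -hM.
split.
- move=> [h3 h4].
  have e1 : (a * b ^ (m - d) < u.+1)%N.
    by rewrite -(ltr_frac R _ _ _ hM0); apply: le_lt_trans h3 h2.
  have e2 : (u < a.+1 * b ^ (m - d))%N.
    by rewrite -(ltr_frac R _ _ _ hM0); apply: le_lt_trans h1 h4.
  have f1 : (a <= u %/ b ^ (m - d))%N by rewrite leq_divRL //; lia.
  have f2 : (u %/ b ^ (m - d) < a.+1)%N by rewrite ltn_divLR.
  lia.
- move=> ->; split.
  + apply: le_trans h1; rewrite ler_frac //; exact: leq_divM.
  + apply: lt_le_trans h2 _; rewrite ler_frac //; exact: ltn_ceil.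
Qed.

Arguments badic_cell {R b m d u a x}.

Definition pt (R : realType) (b m : nat) (u : nat * nat) : R * R :=
  ((u.1)%:R / (b ^ m)%:R, (u.2)%:R / (b ^ m)%:R).

Lemma pt_cell (R : realType) b m u : (2 <= b)%N -> cell R b m u (pt R b m u).
Proof.
move=> hb; have hM0 : (0 < b ^ m)%N by rewrite expn_gt0; lia.
by split; split => //=; rewrite ltr_frac.
Qed.

Lemma elem_mem (R : realType) b m u E p : (2 <= b)%N -> is_elem R b m E ->
  cell R b m u p -> (E p <-> cell R b m u `<=` E).
Proof.
move=> hb [d1 [d2 [a1 [a2 [hd _ _ ->]]]]] [c1 c2].
have h1 : (d1 <= m)%N by lia.
have h2 : (d2 <= m)%N by lia.
split.
- move=> [e1 e2] q [q1 q2]; split.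
  + by apply/(badic_cell hb h1 q1); apply/(badic_cell hb h1 c1).
  + by apply/(badic_cell hb h2 q2); apply/(badic_cell hb h2 c2).
- by move=> /(_ p); apply; split.
Qed.

Arguments elem_mem {R b m u E p}.

Lemma Useq_sub (R : realType) b m u k n : Useq R b m u (k + n) `<=` Useq R b m u k.
Proof.
elim: n => [|n IH]; first by rewrite addn0.
by rewrite addnS => p [] /IH.
Qed.

Lemma separ (R : realType) (b m : nat) (hb : (2 <= b)%N) (u : nat -> nat * nat) :
  (forall n, (n < b ^ m)%N ->
     [/\ ((u n).1 < b ^ m)%N, ((u n).2 < b ^ m)%N &
         cell R b m (u n) `<=` Useq R b m u n]) ->
  forall k n E, (k < n)%N -> (n < b ^ m)%N -> is_elem R b m E ->
  cell R b m (u k) `<=` E -> cell R b m (u n) `<=` E -> False.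
Proof.
move=> H k n E hkn hn hE hk hnE.
have pc := pt_cell R b m (u n) hb.
have [_ _ /(_ _ pc) hU] := H n hn.
have : Useq R b m u k.+1 (pt R b m (u n)).
  by have := Useq_sub R b m u k.+1 (n - k.+1); rewrite subnKC //; apply.
move=> [_]; apply; exists E; split => //; exact: hnE.
Qed.

Theorem mainTheorem3 (R : realType) (b m : nat) (hb : (2 <= b)%N)
  (u : nat -> nat * nat) :
  (forall n, (n < b ^ m)%N ->
     [/\ ((u n).1 < b ^ m)%N, ((u n).2 < b ^ m)%N &
         cell R b m (u n) `<=` Useq R b m u n]) ->
  Useq R b m u (b ^ m) = set0 ->
  (forall E, is_elem R b m E ->
     exists! n, (n < b ^ m)%N /\ cell R b m (u n) `<=` E) /\
  (forall x : 'I_(b ^ m) -> R * R,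
     (forall i : 'I_(b ^ m), cell R b m (u i) (x i)) ->
     is_net R b 0 m (b ^ m) x).
Proof.
move=> H _.
have uniq : forall E n n', is_elem R b m E -> (n < b ^ m)%N -> (n' < b ^ m)%N ->
    cell R b m (u n) `<=` E -> cell R b m (u n') `<=` E -> n = n'.
  move=> E n n' hE hn hn' c c'.
  case: (ltngtP n n') => // h.
  - by case: (separ R b m hb u H _ _ _ h hn' hE c c').
  - by case: (separ R b m hb u H _ _ _ h hn hE c' c).
have part1 : forall E, is_elem R b m E ->
     exists! n, (n < b ^ m)%N /\ cell R b m (u n) `<=` E.
  move=> E hE; have hE' := hE.
  move: hE' => [d1 [d2 [a1 [a2 [hd ha1 ha2 hEe]]]]].
  have hB1 : (0 < b ^ d1)%N by rewrite expn_gt0; lia.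
  have hB2 : (0 < b ^ d2)%N by rewrite expn_gt0; lia.
  have hM : (b ^ m = b ^ d1 * b ^ d2)%N by rewrite -expnD hd.
  have hm1 : (m - d1 = d2)%N by lia.
  have hm2 : (m - d2 = d1)%N by lia.
  have fv : forall n : 'I_(b ^ m), ((u n).1 %/ b ^ (m - d1) < b ^ d1)%N /\
                               ((u n).2 %/ b ^ (m - d2) < b ^ d2)%N.
    move=> n; have [c1 c2 _] := H n (ltn_ord n).
    by rewrite hm1 hm2 !ltn_divLR // -hM mulnC -hM; split.
  pose f (n : 'I_(b ^ m)) : 'I_(b ^ d1) * 'I_(b ^ d2) :=
    (Ordinal (proj1 (fv n)), Ordinal (proj2 (fv n))).
  have cellE : forall n : 'I_(b ^ m), cell R b m (u n) `<=`
       bbox R b d1 d2 ((u n).1 %/ b ^ (m - d1)) ((u n).2 %/ b ^ (m - d2)).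
    move=> n p [p1 p2]; split.
    + by apply/(badic_cell hb _ p1) => //; lia.
    + by apply/(badic_cell hb _ p2) => //; lia.
  have fin : injective f.
    move=> n n' /(congr1 (fun z => (val z.1, val z.2))) /=.
    move=> -[e1 e2].
    apply: val_inj => /=.
    have hE2 : is_elem R b m (bbox R b d1 d2 ((u n).1 %/ b ^ (m - d1))%N
                                  ((u n).2 %/ b ^ (m - d2))%N).
      by exists d1, d2, ((u n).1 %/ b ^ (m - d1))%N, ((u n).2 %/ b ^ (m - d2))%N; split => //; case: (fv n).
    apply: (uniq _ _ _ hE2 (ltn_ord n) (ltn_ord n') (cellE n)).
    by rewrite e1 e2; apply: cellE.
  have := inj_card_onto fin _ (Ordinal ha1, Ordinal ha2).
  rewrite card_prod !card_ord -hM leqnn => /(_ isT) /codomP [n hn].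
  exists (val n); split.
    split; first exact: ltn_ord. rewrite hEe.
    move: hn => /(congr1 (fun z => (val z.1, val z.2))) /=.
    move=> -[-> ->]; exact: cellE.
  move=> n' [hn' c']; apply: (uniq E) => //.
  exact: ltn_ord. rewrite hEe.
  move: hn => /(congr1 (fun z => (val z.1, val z.2))) /=.
  move=> -[-> ->]; exact: cellE.
split => // x hx.
split => //.
- move=> i; have [c1 c2 _] := H i (ltn_ord i).
  have hM0 : (0 < b ^ m)%N by rewrite expn_gt0; lia.
  have [[q1 q2] [q3 q4]] := hx i.
  have z : (0 : R) = 0%:R / (b ^ m)%:R by rewrite mul0r.
  have o : (1 : R) = (b ^ m)%:R / (b ^ m)%:R by rewrite divff // pnatr_eq0 -lt0n.
  split; split.
  + by apply: le_trans q1; rewrite divr_ge0.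
  + by apply: lt_le_trans q2 _; rewrite ler_pdivrMr ?ltr0n // mul1r ler_nat.
  + by apply: le_trans q3; rewrite divr_ge0.
  + by apply: lt_le_trans q4 _; rewrite ler_pdivrMr ?ltr0n // mul1r ler_nat.
- move=> E; rewrite subn0 => hE.
  have [n [[hn cn] un]] := part1 E hE.
  rewrite expn0.
  rewrite (@eq_card _ _ (pred1 (Ordinal hn))) ?card1 // => i.
  apply/idP/idP => [/set_mem /= /asboolP hEx | /eqP ->].
  + apply/eqP; apply: val_inj => /=; apply/esym; apply: un; split; first exact: ltn_ord.
    exact/(elem_mem hb hE (hx i)).
  + by apply/mem_set/asboolP => /=; apply/(elem_mem hb hE (hx _)).
Qed.
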